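(* If all slice categories $\mathcal{C}/X$ of a category $\mathcal{C}$ have partial map classifiers, then $\mathcal{C}$ is strongly amendable.
   Context: A category is amendable if for every morphism $t_L : L \to L'$ there is a factorization $t_L = \beta \circ t_L'$ with $t_L' : L \rightarrowtail L''$ mono and $\beta : L'' \to L'$ such that for every factorization $t_L = \alpha \circ m$ with $m : L \rightarrowtail G_L$ mono and $\alpha : G_L \to L'$ there exists $\alpha' : G_L \to L''$ with $\alpha' \circ m = t_L'$ and $\beta \circ \alpha' = \alpha$. It is strongly amendable if the factorization $(t_L',\beta)$ can be chosen so that moreover, for every such $(m,\alpha)$, the corresponding $\alpha'$ can be chosen so that $L \xleftarrow{1_L} L \xrightarrow{m} G_L$ is a pullback of $L \xrightarrow{t_L'} L'' \xleftarrow{\alpha'} G_L$. *)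

(* Defs.v *)
From Stdlib Require Import ProofIrrelevance.

Set Implicit Arguments.
Unset Strict Implicit.

(** Categories, with Leibniz equality of morphisms. [comp g f] is g ∘ f. *)
Record Category := {
  Obj :> Type;
  Hom : Obj -> Obj -> Type;
  idm : forall A : Obj, Hom A A;
  comp : forall A B C : Obj, Hom B C -> Hom A B -> Hom A C;
  comp_assoc : forall (A B C D : Obj) (h : Hom C D) (g : Hom B C) (f : Hom A B),
      comp h (comp g f) = comp (comp h g) f;
  comp_id_l : forall (A B : Obj) (f : Hom A B), comp (idm B) f = f;
  comp_id_r : forall (A B : Obj) (f : Hom A B), comp f (idm A) = f
}.

Arguments Hom {c} A B.
Arguments idm {c} A.
Arguments comp {c A B C} g f : rename.

Definition mono (C : Category) (A B : C) (f : Hom A B) : Prop :=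
  forall (Z : C) (g h : Hom Z A), comp f g = comp f h -> g = h.

Definition is_pullback (C : Category) (A B Z P : C)
  (f : Hom A Z) (g : Hom B Z) (p1 : Hom P A) (p2 : Hom P B) : Prop :=
  comp f p1 = comp g p2 /\
  forall (Q : C) (q1 : Hom Q A) (q2 : Hom Q B),
    comp f q1 = comp g q2 ->
    exists u : Hom Q P,
      (comp p1 u = q1 /\ comp p2 u = q2) /\
      forall v : Hom Q P, comp p1 v = q1 -> comp p2 v = q2 -> v = u.

Definition has_partial_map_classifiers (C : Category) : Prop :=
  exists (T : C -> C) (eta : forall B : C, Hom B (T B)),
    (forall B : C, mono (eta B)) /\
    forall (A B D : C) (m : Hom D A) (f : Hom D B),
      mono m ->
      exists phi : Hom A (T B),
        is_pullback phi (eta B) m f /\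
        forall psi : Hom A (T B), is_pullback psi (eta B) m f -> psi = phi.

Section Slice.
Variables (C : Category) (X : C).

Definition slice_obj := { A : C & Hom A X }.
Definition slice_hom (a b : slice_obj) :=
  { f : Hom (projT1 a) (projT1 b) | comp (projT2 b) f = projT2 a }.

Definition slice_id (a : slice_obj) : slice_hom a a :=
  exist _ (idm (projT1 a)) (comp_id_r (projT2 a)).

Lemma slice_comp_proof (a b c : slice_obj) (g : slice_hom b c) (f : slice_hom a b) :
  comp (projT2 c) (comp (proj1_sig g) (proj1_sig f)) = projT2 a.
Proof.
  destruct g as [g Hg], f as [f Hf]; simpl.
  rewrite comp_assoc, Hg; exact Hf.
Qed.

Definition slice_comp (a b c : slice_obj) (g : slice_hom b c) (f : slice_hom a b)
  : slice_hom a c :=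
  exist _ (comp (proj1_sig g) (proj1_sig f)) (slice_comp_proof g f).

Lemma slice_hom_eq (a b : slice_obj) (f g : slice_hom a b) :
  proj1_sig f = proj1_sig g -> f = g.
Proof.
  destruct f as [f Hf], g as [g Hg]; simpl; intros ->.
  f_equal; apply proof_irrelevance.
Qed.

Definition Slice : Category.
Proof.
  refine {| Obj := slice_obj; Hom := slice_hom; idm := slice_id;
            comp := slice_comp |}.
  - intros; apply slice_hom_eq; simpl; apply comp_assoc.
  - intros; apply slice_hom_eq; simpl; apply comp_id_l.
  - intros; apply slice_hom_eq; simpl; apply comp_id_r.
Defined.
End Slice.

Definition amendable (C : Category) : Prop :=
  forall (L L' : C) (tL : Hom L L'),
    exists (L'' : C) (tL' : Hom L L'') (beta : Hom L'' L'),
      mono tL' /\ comp beta tL' = tL /\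
      forall (GL : C) (m : Hom L GL) (alpha : Hom GL L'),
        mono m -> comp alpha m = tL ->
        exists alpha' : Hom GL L'',
          comp alpha' m = tL' /\ comp beta alpha' = alpha.

Definition strongly_amendable (C : Category) : Prop :=
  forall (L L' : C) (tL : Hom L L'),
    exists (L'' : C) (tL' : Hom L L'') (beta : Hom L'' L'),
      mono tL' /\ comp beta tL' = tL /\
      forall (GL : C) (m : Hom L GL) (alpha : Hom GL L'),
        mono m -> comp alpha m = tL ->
        exists alpha' : Hom GL L'',
          comp alpha' m = tL' /\ comp beta alpha' = alpha /\
          is_pullback tL' alpha' (idm L) m.

(* Main.v *)
Require Import Defs.

Theorem proposition3 (C : Category) :
  (forall X : C, has_partial_map_classifiers (Slice X)) ->
  strongly_amendable C.
Proof.
  intros H L L' tL.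
  destruct (H L') as [T [eta [Hmono Hcl]]].
  set (a := (existT (fun A : C => Hom A L') L tL : slice_obj L')).
  set (e := (eta a : slice_hom a (T a))).
  assert (He := proj2_sig e).
  exists (projT1 (T a)), (proj1_sig e), (projT2 (T a)).
  assert (Hbt : comp (projT2 (T a)) (proj1_sig e) = tL) by exact He.
  split; [|split; [exact Hbt|]].
  - intros Z g h Hgh.
    set (z := (existT (fun A : C => Hom A L') Z (comp tL g) : slice_obj L')).
    assert (pg : comp (projT2 a) g = projT2 z) by reflexivity.
    assert (ph : comp (projT2 a) h = projT2 z).
    { simpl. rewrite <- Hbt, <- !comp_assoc. f_equal. symmetry. exact Hgh. }
    set (sg := exist _ g pg : slice_hom z a).
    set (sh := exist _ h ph : slice_hom z a).
    assert (Heq : sg = sh).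
    { apply (Hmono a z sg sh). apply slice_hom_eq. simpl. exact Hgh. }
    exact (f_equal (@proj1_sig _ _) Heq).
  - intros GL m alpha Hm Ham.
    set (g := (existT (fun A : C => Hom A L') GL alpha : slice_obj L')).
    assert (pm : comp (projT2 g) m = projT2 a) by exact Ham.
    set (sm := exist _ m pm : slice_hom a g).
    assert (Hsm : @mono (Slice L') a g sm).
    { intros Z u v Huv. apply slice_hom_eq.
      apply Hm. exact (f_equal (@proj1_sig _ _) Huv). }
    destruct (Hcl g a a sm (slice_id a) Hsm) as [phi [[Hsq Hpb] _]].
    assert (Hphi := proj2_sig phi).
    change (comp (projT2 (T a)) (proj1_sig phi) = alpha) in Hphi.
    assert (Hsq' := f_equal (@proj1_sig _ _) Hsq).
    simpl in Hsq'. rewrite comp_id_r in Hsq'.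
    exists (proj1_sig phi).
    split; [exact Hsq'|split; [exact Hphi|]].
    split.
    + rewrite comp_id_r. symmetry. exact Hsq'.
    + intros Q q1 q2 Hq.
      assert (p1 : comp (projT2 a) q1 = comp alpha q2).
      { simpl. rewrite <- Hbt, <- comp_assoc. 
        transitivity (comp (projT2 (T a)) (comp (proj1_sig phi) q2)).
        { f_equal. exact Hq. }
        rewrite comp_assoc. f_equal. exact Hphi. }
      set (q := (existT (fun A : C => Hom A L') Q (comp alpha q2) : slice_obj L')).
      set (s1 := exist _ q1 p1 : slice_hom q a).
      set (s2 := exist _ q2 eq_refl : slice_hom q g).
      destruct (Hpb q s2 s1) as [u [[Hu1 Hu2] _]].
      { apply slice_hom_eq. simpl. symmetry. exact Hq. }
      exists q1. split; [split|].
      * apply comp_id_l.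
      * assert (E1 := f_equal (@proj1_sig _ _) Hu1).
        assert (E2 := f_equal (@proj1_sig _ _) Hu2).
        simpl in E1, E2. rewrite comp_id_l in E2. rewrite <- E2. exact E1.
      * intros v Hv _. rewrite comp_id_l in Hv. exact Hv.
Qed.
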